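(* For $X,Y\in L^\infty$, \[ d_H(\mathbb{E}[X],\mathbb{E}[Y]) \le d_H(\mathrm{supp}\,X,\mathrm{supp}\,Y) \le \|X-Y\|_\infty, \] where $\mathrm{supp}\,X$ denotes the closed support of the law of $X$.
   Context: $\mathbb{K}$ is a local field with non-archimedean absolute value $|\cdot|$ satisfying $|x|=0 \iff x=0$, $|xy|=|x||y|$ and $|x+y|\le |x|\vee|y|$. $(\Omega,\mathcal{F},\mathbb{P})$ is a probability space; random variables equal a.s. are identified. $L^\infty$ is the space of $\mathbb{K}$-valued random variables $X$ with $\|X\|_\infty:=\operatorname{ess\,sup}|X|<\infty$. For $X\in L^\infty$, $\varepsilon(X):=\inf\{\|X-c\|_\infty : c\in\mathbb{K}\}$ and $\mathbb{E}[X]:=\{c\in\mathbb{K} : \|X-c\|_\infty=\varepsilon(X)\}$. For subsets $A,B\subseteq\mathbb{K}$, $d_H(A,B):=\sup_{a\in A}\inf_{b\in B}|a-b| \vee \sup_{b\in B}\inf_{a\in A}|b-a|$. *)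

(* Defs.v *)
From HB Require Import structures.
From mathcomp Require Import all_boot all_order all_algebra.
From mathcomp Require Import all_classical all_reals all_analysis ess_sup_inf.
Set Implicit Arguments. Unset Strict Implicit. Unset Printing Implicit Defensive.
Import Order.TTheory GRing.Theory Num.Theory numFieldNormedType.Exports.
Local Open Scope classical_set_scope.
Local Open Scope ring_scope.

(* A non-archimedean local field: a field K with a non-trivial (non-discrete)
   ultrametric absolute value abs : K -> R whose closed unit ball is
   (sequentially) compact for the metric (x,y) |-> abs (x - y), i.e. K is
   locally compact for the topology induced by abs. *)
Record nonarch_local_field (R : realType) (K : fieldType) (abs : K -> R) : Prop := {
  nlf_ge0 : forall x, 0 <= abs x;
  nlf_eq0 : forall x, abs x = 0 <-> x = 0;
  nlf_mul : forall x y, abs (x * y) = abs x * abs y;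
  nlf_ultra : forall x y, abs (x + y) <= Num.max (abs x) (abs y);
  nlf_nontriv : exists x, abs x != 0 /\ abs x != 1;
  nlf_compact : forall u : nat -> K, (forall n, abs (u n) <= 1) ->
      exists (phi : nat -> nat) (l : K),
        (forall n, (phi n < phi n.+1)%N) /\
        (fun n => abs (u (phi n) - l)) @ \oo --> (0 : R) }.

Section Defs.
Context (R : realType) (K : fieldType) (abs : K -> R).
Context (d : measure_display) (T : measurableType d) (P : probability T R).

(* Borel measurability of X : T -> K (the Borel sigma-algebra of the
   separable ultrametric space K is generated by the open balls). *)
Definition Kmeasurable (X : T -> K) : Prop :=
  forall (c : K) (r : R), measurable (X @^-1` [set x | abs (x - c) < r]).

Definition normInf (X : T -> K) : \bar R := ess_sup P (fun w => (abs (X w))%:E).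

Definition Linfty (X : T -> K) : Prop := Kmeasurable X /\ (normInf X < +oo)%E.

Definition epsK (X : T -> K) : \bar R :=
  ereal_inf [set normInf (fun w => X w - c) | c in [set: K]].

Definition EK (X : T -> K) : set K := [set c | normInf (fun w => X w - c) = epsK X].

Definition suppK (X : T -> K) : set K :=
  [set x | forall r : R, 0 < r -> (0 < P (X @^-1` [set y | (abs (y - x) < r)%R]))%E].

Definition dH (A B : set K) : \bar R :=
  maxe (ereal_sup [set ereal_inf [set (abs (a - b))%:E | b in B] | a in A])
       (ereal_sup [set ereal_inf [set (abs (b - a))%:E | a in A] | b in B]).
End Defs.

(* Main.v *)
Require Import Defs.
From HB Require Import structures.
From mathcomp Require Import all_boot all_order all_algebra.
From mathcomp Require Import all_classical all_reals all_analysis ess_sup_inf.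
From mathcomp Require Import ring lra.
Import Order.TTheory GRing.Theory Num.Theory.
Local Open Scope classical_set_scope.
Local Open Scope ring_scope.

Lemma bernoulli (R : realType) (a : R) n : 1 <= a -> 1 + n%:R * (a - 1) <= a ^+ n.
Proof.
move=> a1; elim: n => [|n IH]; first by rewrite mul0r addr0 expr0.
rewrite exprS -natr1.
have h0 : 0 <= n%:R :> R by [].
have : a * (1 + n%:R * (a - 1)) <= a * a ^+ n by rewrite ler_wpM2l //; lra.
have : 0 <= n%:R * ((a - 1) * (a - 1)) by apply: mulr_ge0 => //; nra.
nra.
Qed.

Lemma big_pow (R : realType) (a M : R) : 1 < a -> exists n : nat, M <= a ^+ n.
Proof.
move=> a1.
set M' := Num.max M 0.
have hM : 0 <= M' / (a - 1) by apply: divr_ge0; [rewrite le_max lexx orbT|lra].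
have := archi_boundP hM; set n := Num.Def.archi_bound _ => hn.
exists n; apply: (le_trans _ (@bernoulli R a n (ltW a1))).
have : M' < n%:R * (a - 1) by rewrite -ltr_pdivrMr; lra.
have : M <= M' by rewrite le_max lexx.
lra.
Qed.

Section Ultra.
Context (R : realType) (K : fieldType) (abs : K -> R) (hK : nonarch_local_field abs).

Lemma abs_ge0 x : 0 <= abs x. Proof. exact: nlf_ge0 hK x. Qed.

Lemma abs0 : abs 0 = 0. Proof. by apply/(nlf_eq0 hK). Qed.

Lemma abs1 : abs 1 = 1.
Proof.
have h := nlf_mul hK 1 1; rewrite mulr1 in h.
have h0 : abs 1 != 0 by apply/eqP => /(nlf_eq0 hK)/eqP; rewrite oner_eq0.
by apply: (mulfI h0); rewrite mulr1 -h.
Qed.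

Lemma absN x : abs (- x) = abs x.
Proof.
have h := nlf_mul hK (-1) (-1); rewrite mulrNN mulr1 abs1 in h.
have h0 := abs_ge0 (-1).
have e1 : abs (-1) = 1.
  by apply/eqP; rewrite eq_le; apply/andP; split; nra.
by rewrite -mulN1r nlf_mul // e1 mul1r.
Qed.

Lemma absB x y : abs (x - y) = abs (y - x).
Proof. by rewrite -absN opprB. Qed.

Lemma ultra x y z : abs (x - z) <= Num.max (abs (x - y)) (abs (y - z)).
Proof. by have := nlf_ultra hK (x - y) (y - z); rewrite addrA subrK. Qed.

Lemma ultra_le x y z r : abs (x - y) <= r -> abs (y - z) <= r -> abs (x - z) <= r.
Proof. by move=> h1 h2; apply: le_trans (ultra x y z) _; rewrite ge_max h1 h2. Qed.

Lemma ultra_lt x y z r : abs (x - y) < r -> abs (y - z) < r -> abs (x - z) < r.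
Proof. by move=> h1 h2; apply: le_lt_trans (ultra x y z) _; rewrite gt_max h1 h2. Qed.

Lemma ultra_eq x y c : abs (y - x) < abs (x - c) -> abs (y - c) = abs (x - c).
Proof.
move=> h; apply/eqP; rewrite eq_le; apply/andP; split.
  by apply: le_trans (ultra y x c) _; rewrite ge_max (ltW h) lexx.
have := ultra x y c; rewrite le_max => /orP[]; last by [].
by rewrite (absB x y) => hh; move: (lt_le_trans h hh); rewrite ltxx.
Qed.

Lemma absV x : x != 0 -> abs (x^-1) = (abs x)^-1.
Proof.
move=> x0; have h := nlf_mul hK x (x^-1); rewrite mulfV // abs1 in h.
have ax : abs x != 0 by apply/eqP => /(nlf_eq0 hK)/eqP; rewrite (negPf x0).
by apply: (mulfI ax); rewrite -nlf_mul // mulfV // abs1 mulfV.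
Qed.

Lemma absX x n : abs (x ^+ n) = abs x ^+ n.
Proof. elim: n => [|n IH]; first by rewrite !expr0 abs1. by rewrite !exprS nlf_mul // IH. Qed.

Lemma big_elt (M : R) : exists l : K, l != 0 /\ M <= abs l.
Proof.
have [x [x0 x1]] := nlf_nontriv hK.
have xn0 : x != 0 by apply: contra x0 => /eqP ->; rewrite abs0.
have ax : 0 < abs x by rewrite lt_neqAle eq_sym x0 abs_ge0.
have [a [an0 a1]] : exists a : K, a != 0 /\ 1 < abs a.
  have [lt1|gt1] := ltP (abs x) 1.
    exists x^-1; split; first by rewrite invr_eq0.
    by rewrite absV // invf_gt1.
  exists x; split => //; by rewrite lt_neqAle eq_sym x1.
have [n hn] := @big_pow R (abs a) M a1.
exists (a ^+ n); split; first by rewrite expf_neq0.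
by rewrite absX.
Qed.

Lemma TB (rho M : R) : 0 < rho ->
  exists s : seq K, forall x, abs x <= M -> exists i, abs (x - nth 0 s i) < rho.
Proof.
move=> rho0; apply: contrapT => H.
have gex : forall s : seq K, exists x, abs x <= M /\ forall z, z \in s -> rho <= abs (x - z).
  move=> s; apply: contrapT => nE; apply: H; exists s => x xM.
  apply: contrapT => nI; apply: nE; exists x; split => // z zs.
  rewrite leNgt; apply/negP => lt; apply: nI; exists (index z s).
  by rewrite nth_index.
pose g s := proj1_sig (cid (gex s)).
have gM s : abs (g s) <= M by exact: (proj1 (proj2_sig (cid (gex s)))).
have gF s z : z \in s -> rho <= abs (g s - z) by move=> zs; exact: (proj2 (proj2_sig (cid (gex s))) z zs).
pose L := fix L n := if n is n'.+1 then g (L n') :: L n' else [::].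
pose u n := g (L n).
have uL m n : (m < n)%N -> u m \in L n.
  elim: n => [//|n IH]; rewrite ltnS leq_eqVlt => /orP[/eqP ->|/IH h].
    by rewrite /= in_cons eqxx.
  by rewrite /= in_cons h orbT.
have sep m n : (m < n)%N -> rho <= abs (u n - u m) by move=> mn; apply: gF; apply: uL.
have [la [la0 laM]] := big_elt M.
have ala : 0 < abs la.
  by rewrite lt_neqAle abs_ge0 andbT eq_sym; apply/eqP => /(nlf_eq0 hK)/eqP; rewrite (negPf la0).
pose v n := u n / la.
have v1 n : abs (v n) <= 1.
  rewrite /v nlf_mul // absV // ler_pdivrMr ?mul1r //.
  exact: le_trans (gM _) laM.
have [phi [l [phiS cv]]] := nlf_compact hK v1.
have ep : 0 < rho / abs la by apply: divr_gt0.
have := cvgr_dist_lt _ _ cv _ ep.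
case => N _ HN.
have h1 : abs (v (phi N) - l) < rho / abs la.
  by have := HN N (leqnn N); rewrite /= sub0r normrN ger0_norm ?abs_ge0.
have h2 : abs (v (phi N.+1) - l) < rho / abs la.
  by have := HN N.+1 (leqnSn N); rewrite /= sub0r normrN ger0_norm ?abs_ge0.
have h3 : abs (v (phi N.+1) - v (phi N)) < rho / abs la.
  by apply: (ultra_lt _ l) => //; rewrite absB.
have e : u (phi N.+1) - u (phi N) = la * (v (phi N.+1) - v (phi N)).
  by rewrite /v mulrBr !(mulrC la) !mulfVK.
have := sep _ _ (phiS N); rewrite e nlf_mul // => h4.
move: h3; rewrite ltr_pdivlMr // mulrC => h5.
by move: (le_lt_trans h4 h5); rewrite ltxx.
Qed.

Lemma lee_gt_bound (a b : \bar R) : (forall t : R, (b < t%:E)%E -> (a <= t%:E)%E) -> (a <= b)%E.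
Proof.
move=> H; case: b H => [s| |] H; last 2 first.
- by rewrite leey.
- case: a H => [r| |//] H.
  + by have := H (r - 1)%R (ltNyr _); rewrite lee_fin => h; exfalso; lra.
  + by have := H 0 (ltNyr _).
case: a H => [r| |] H; last by rewrite leNye.
- rewrite lee_fin leNgt; apply/negP => h.
  have := H ((r + s) / 2)%R; rewrite !lte_fin !lee_fin => hh.
  have : (s < (r + s) / 2)%R by lra.
  move/hh; lra.
- have : (s < s + 1)%R by lra.
  by rewrite -lte_fin => /H.
Qed.

Lemma lee_bound (a b : \bar R) : (forall r : R, (b <= r%:E)%E -> (a <= r%:E)%E) -> (a <= b)%E.
Proof. by move=> H; apply: lee_gt_bound => t /ltW; apply: H. Qed.

Section Meas.
Context (d : measure_display) (T : measurableType d) (P : probability T R).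

Lemma ae_exists (A : set T) (Q : T -> Prop) : measurable A -> (0 < P A)%E ->
  (\forall w \ae P, Q w) -> exists w, A w /\ Q w.
Proof.
move=> mA PA [N [mN PN HN]]; apply: contrapT => H.
have AN : A `<=` N.
  move=> w Aw; apply: HN => Qw; apply: H; by exists w.
have h : (P A <= P N)%E by apply: le_measure => //; rewrite inE.
by rewrite PN in h; move: (lt_le_trans PA h); rewrite ltxx.
Qed.

Lemma ball_meas (X : T -> K) (c : K) (r : R) : Kmeasurable abs X ->
  measurable (X @^-1` [set y | abs (y - c) < r]).
Proof. by move=> hX; apply: hX. Qed.

Lemma ae_bound (X : T -> K) : Linfty abs P X ->
  exists M : R, \forall w \ae P, abs (X w) <= M.
Proof.
move=> [_ hX]; rewrite /normInf in hX.
have [M hM] : exists M : R, (ess_sup P (fun w => (abs (X w))%:E) <= M%:E)%E.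
  move: hX; case: (ess_sup _ _) => [r _|//|_]; first by exists r.
  by exists 0; rewrite leNye.
exists M; move/ess_supP: hM; apply: filterS => w /=; by rewrite lee_fin.
Qed.

Lemma supp_full (X : T -> K) : Linfty abs P X ->
  \forall w \ae P, suppK abs P X (X w).
Proof.
move=> hL; have [M hM] := ae_bound X hL; have mX := proj1 hL.
pose rho (n : nat) : R := (n.+1%:R)^-1.
have rho0 n : 0 < rho n by rewrite /rho invr_gt0.
pose s n := proj1_sig (cid (TB (rho n) M (rho0 n))).
have sP n x : abs x <= M -> exists i, abs (x - nth 0 (s n) i) < rho n.
  exact: (proj2_sig (cid (TB (rho n) M (rho0 n)))).
pose Bl n i := X @^-1` [set y | abs (y - nth 0 (s n) i) < rho n].
pose B n i := if P (Bl n i) == 0%E then Bl n i else set0.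
have negB : P.-negligible (\bigcup_n \bigcup_i B n i).
  apply: negligible_bigcup => n; apply: negligible_bigcup => i.
  rewrite /B; case: ifPn => [/eqP h|_]; last exact: negligible_set0.
  by apply/negligibleP => //; apply: ball_meas.
have neg0 : P.-negligible (~` [set x | abs (X x) <= M]) := hM.
apply: (negligibleS _ (negligibleU neg0 negB)).
move=> w /= nS.
have [wM|wM] := pselect (abs (X w) <= M); last by left.
right.
have [r [r0 Pr]] : exists r, 0 < r /\ P (X @^-1` [set y | abs (y - X w) < r]) = 0%E.
  apply: contrapT => H; apply: nS => r r0; rewrite lt_neqAle measure_ge0 andbT.
  by apply/eqP => h; apply: H; exists r; split.
have [n hn] : exists n, rho n <= r.
  have r'0 : 0 <= r^-1 by rewrite invr_ge0 ltW.
  have := archi_boundP r'0; set n := Num.Def.archi_bound _ => hn.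
  exists n; rewrite /rho.
  rewrite invf_ple ?posrE //.
  by apply: ltW; apply: lt_le_trans hn _; rewrite ler_nat.
have [i hi] := sP n _ wM.
exists n; first by []. exists i; first by [].
have sub : Bl n i `<=` X @^-1` [set y | abs (y - X w) < r].
  move=> t /= ht; apply: lt_le_trans hn.
  by apply: (ultra_lt _ (nth 0 (s n) i)) => //; rewrite absB.
have P0 : P (Bl n i) = 0%E.
  apply/eqP; rewrite eq_le measure_ge0 andbT -Pr.
  by apply: le_measure => //; rewrite inE; apply: ball_meas.
by rewrite /B P0 eqxx.
Qed.

Lemma F1 (X : T -> K) (hX : Linfty abs P X) (c : K) (r : R) :
  (normInf abs P (fun w => (X w - c)%R) <= r%:E)%E <->
  (forall x, suppK abs P X x -> abs (x - c) <= r).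
Proof.
split; last first.
  move=> H; rewrite /normInf; apply/ess_supP.
  by apply: filterS (supp_full X hX) => w /= hw; rewrite lee_fin; apply: H.
rewrite /normInf => /ess_supP hae x hx.
have hae' : \forall w \ae P, abs (X w - c) <= r.
  by apply: filterS hae => w /=; rewrite lee_fin.
rewrite leNgt; apply/negP => hlt.
have [hpos|hz] := ltP 0 (abs (x - c)).
  have [w [Aw Qw]] := ae_exists _ _ (ball_meas X x (abs (x - c)) (proj1 hX)) (hx _ hpos) hae'.
  rewrite /= in Aw; rewrite (ultra_eq _ _ _ Aw) in Qw.
  by move: (le_lt_trans Qw hlt); rewrite ltxx.
have [w [_ Qw]] := ae_exists _ _ (ball_meas X x 1 (proj1 hX)) (hx _ ltr01) hae'.
have := abs_ge0 (X w - c); have := abs_ge0 (x - c); lra.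
Qed.

Lemma supp_ne (X : T -> K) (hX : Linfty abs P X) : exists x, suppK abs P X x.
Proof.
have PT : (0 < P setT)%E by rewrite probability_setT.
have [w [_ h]] := ae_exists setT _ measurableT PT (supp_full X hX).
by exists (X w).
Qed.

Lemma normInf_min (X : T -> K) (hX : Linfty abs P X) x0 (hx0 : suppK abs P X x0) c :
  (normInf abs P (fun w => (X w - x0)%R) <= normInf abs P (fun w => (X w - c)%R))%E.
Proof.
apply: lee_bound => r /(F1 X hX) H; apply/(F1 X hX) => x hx.
by apply: (ultra_le _ c) => //; [apply: H | rewrite absB; apply: H].
Qed.

Lemma eps_eq (X : T -> K) (hX : Linfty abs P X) x0 (hx0 : suppK abs P X x0) :
  epsK abs P X = normInf abs P (fun w => (X w - x0)%R).
Proof.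
apply/eqP; rewrite eq_le; apply/andP; split.
  by apply: ereal_inf_lbound; exists x0.
by apply: le_ereal_inf_tmp => z [c _ <-]; apply: normInf_min.
Qed.

Lemma EK_le (X : T -> K) (hX : Linfty abs P X) x0 (hx0 : suppK abs P X x0) c :
  (normInf abs P (fun w => (X w - c)%R) <= normInf abs P (fun w => (X w - x0)%R))%E ->
  EK abs P X c.
Proof.
move=> h; rewrite /EK /= (eps_eq X hX x0 hx0); apply/eqP; rewrite eq_le h /=.
exact: (normInf_min X hX x0 hx0).
Qed.

Lemma EK_ge (X : T -> K) (hX : Linfty abs P X) x0 (hx0 : suppK abs P X x0) c :
  EK abs P X c ->
  (normInf abs P (fun w => (X w - c)%R) <= normInf abs P (fun w => (X w - x0)%R))%E.
Proof. by rewrite /EK /= (eps_eq X hX x0 hx0) => ->. Qed.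

Lemma halfA (X Y : T -> K) (hX : Linfty abs P X) (hY : Linfty abs P Y) (t : R)
  (nXY : forall x, suppK abs P X x -> exists y, suppK abs P Y y /\ abs (x - y) < t)
  (nYX : forall y, suppK abs P Y y -> exists x, suppK abs P X x /\ abs (y - x) < t) :
  forall c, EK abs P Y c -> exists a, EK abs P X a /\ abs (c - a) <= t.
Proof.
move=> c hc.
have [x0 hx0] := supp_ne X hX.
have [y0 [hy0 xy0]] := nXY _ hx0.
have [le|gt] := leP (abs (c - x0)) t.
  exists x0; split => //; apply: (EK_le X hX x0 hx0); exact: lexx.
exists c; split; last first.
  by rewrite subrr abs0; have := abs_ge0 (x0 - y0); lra.
apply: (EK_le X hX x0 hx0); apply: lee_bound => r /(F1 X hX) H.
apply/(F1 X hX).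
pose m := Num.max t r.
have tm : t <= m by rewrite le_max lexx.
have rm : r <= m by rewrite le_max lexx orbT.
have hYm : (normInf abs P (fun w => (Y w - y0)%R) <= m%:E)%E.
  apply/(F1 Y hY) => y hy.
  have [x [hx yx]] := nYX _ hy.
  apply: (ultra_le _ x); first by apply: ltW; apply: lt_le_trans yx tm.
  apply: (ultra_le _ x0); first by apply: le_trans (H _ hx) rm.
  by apply: ltW; apply: lt_le_trans xy0 tm.
have := le_trans (EK_ge Y hY y0 hy0 c hc) hYm; move/(F1 Y hY) => /(_ _ hy0) hy0c.
have hx0c : abs (x0 - c) <= m.
  by apply: (ultra_le _ y0) => //; apply: ltW; apply: lt_le_trans xy0 tm.
have hx0r : abs (x0 - c) <= r.
  move: hx0c; rewrite le_max => /orP[h|//].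
  by move: gt; rewrite absB => gt; move: (lt_le_trans gt h); rewrite ltxx.
move=> x hx; apply: (ultra_le _ x0) => //; exact: H.
Qed.

Lemma halfB (X Y : T -> K) (hX : Linfty abs P X) (hY : Linfty abs P Y) (r : R)
  (r0 : 0 <= r) (hae : \forall w \ae P, abs (X w - Y w) <= r) :
  forall x, suppK abs P X x ->
  (ereal_inf [set (abs (x - b))%:E | b in suppK abs P Y] <= r%:E)%E.
Proof.
move=> x hx; apply: lee_gt_bound => t ht.
have rt : r < t by rewrite -lte_fin.
have t0 : 0 < t by apply: le_lt_trans rt.
have [w [Aw [Qw Sw]]] := ae_exists _ _ (ball_meas X x t (proj1 hX)) (hx _ t0)
   (filterI hae (supp_full Y hY)).
apply: le_trans (ereal_inf_lbound _) _; first by exists (Y w).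
rewrite lee_fin; apply: ltW; apply: (ultra_lt _ (X w)); first by rewrite absB.
by apply: le_lt_trans Qw rt.
Qed.

End Meas.

End Ultra.

Theorem mainTheorem3 (R : realType) (K : fieldType) (abs : K -> R)
  (hK : nonarch_local_field abs)
  (d : measure_display) (T : measurableType d) (P : probability T R)
  (X Y : T -> K) (hX : Linfty abs P X) (hY : Linfty abs P Y) :
  (dH abs (EK abs P X) (EK abs P Y) <= dH abs (suppK abs P X) (suppK abs P Y))%E /\
  (dH abs (suppK abs P X) (suppK abs P Y) <= normInf abs P (fun w => (X w - Y w)%R))%E.
Proof.
split.
- rewrite {2}/dH; apply: lee_gt_bound => t; rewrite gt_max => /andP[h1 h2].
  have nXY : forall x, suppK abs P X x -> exists y, suppK abs P Y y /\ abs (x - y) < t.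
    move=> x hx.
    have : (ereal_inf [set (abs (x - b))%:E | b in suppK abs P Y] < t%:E)%E.
      by apply: le_lt_trans h1; apply: ereal_sup_ubound; exists x.
    by move/ereal_inf_lt => [z [y hy <-]]; rewrite lte_fin => h; exists y.
  have nYX : forall y, suppK abs P Y y -> exists x, suppK abs P X x /\ abs (y - x) < t.
    move=> y hy.
    have : (ereal_inf [set (abs (y - a))%:E | a in suppK abs P X] < t%:E)%E.
      by apply: le_lt_trans h2; apply: ereal_sup_ubound; exists y.
    by move/ereal_inf_lt => [z [x hx <-]]; rewrite lte_fin => h; exists x.
  rewrite /dH ge_max; apply/andP; split; apply: ge_ereal_sup => z [a ha <-].
    have [b [hb ab]] := @halfA _ _ _ hK _ _ P Y X hY hX t nYX nXY a ha.
    by apply: le_trans (ereal_inf_lbound _) _; [by exists b | rewrite lee_fin].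
  have [b [hb ab]] := @halfA _ _ _ hK _ _ P X Y hX hY t nXY nYX a ha.
  by apply: le_trans (ereal_inf_lbound _) _; [by exists b | rewrite lee_fin].
- apply: lee_bound => r; rewrite /normInf => /ess_supP hae.
  have hae1 : \forall w \ae P, abs (X w - Y w) <= r.
    by apply: filterS hae => w /=; rewrite lee_fin.
  have hae2 : \forall w \ae P, abs (Y w - X w) <= r.
    by apply: filterS hae => w /=; rewrite lee_fin absB.
  have PT : (0 < P setT)%E by rewrite probability_setT.
  have r0 : 0 <= r.
    have [w [_ hw]] := @ae_exists _ _ _ P setT _ measurableT PT hae1.
    exact: le_trans (@abs_ge0 _ _ _ hK _) hw.
  rewrite /dH ge_max; apply/andP; split; apply: ge_ereal_sup => z [x hx <-].
    exact: (@halfB _ _ _ hK _ _ P X Y hX hY r r0 hae1 x hx).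
  exact: (@halfB _ _ _ hK _ _ P Y X hY hX r r0 hae2 x hx).
Qed.
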